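(* Let $\bm\mu^N\in\mathcal P(\mathcal X^N)$, $N\in\mathbb N$, and $\mathbb M\in\mathcal P(\mathcal P(\mathcal X))$ be such that $L^N_\#\bm\mu^N\rightharpoonup\mathbb M$ weakly as $N\to\infty$. Then $$\liminf_{N\to\infty}\frac1N\mathcal H(\bm\mu^N\mid\bm\pi^N)\ge\int_{\mathcal P(\mathcal X)}(\mathcal F(\nu)-\mathcal F_0)\,\mathbb M(d\nu)=\mathbb F(\mathbb M)-\mathcal F_0,\qquad \mathcal F_0:=\inf_{\mu\in\mathcal P(\mathcal X)}\mathcal F(\mu).$$
   Context: $\mathcal X=\{1,\dots,d\}$ finite, $\mathcal P(\mathcal X)\subset\mathbb R^{\mathcal X}$. $K:\mathcal P(\mathcal X)\times\mathcal X\to\mathbb R$ with each $K_x$ twice continuously differentiable on a neighbourhood of $\mathcal P(\mathcal X)$; $U(\mu)=\sum_x\mu_xK_x(\mu)$; $\mathcal F(\mu)=\sum_x\mu_x\log\mu_x+U(\mu)$ (with $0\log0=0$); $\mathbb F(\mathbb M)=\int\mathcal F\,d\mathbb M$. For $\bm x\in\mathcal X^N$, $L^N(\bm x)=\frac1N\sum_{i=1}^N\delta_{x_i}\in\mathcal P(\mathcal X)$, and $L^N_\#\bm\mu$ is the push-forward of $\bm\mu\in\mathcal P(\mathcal X^N)$. $\bm\pi^N_{\bm x}=\exp(-NU(L^N\bm x))/\bm Z^N$ with $\bm Z^N=\sum_{\bm x}\exp(-NU(L^N\bm x))$. $\mathcal H(\bm\mu\mid\bm\pi)=\sum_{\bm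 x}\bm\mu_{\bm x}\log(\bm\mu_{\bm x}/\bm\pi_{\bm x})$. *)

(* Defs.v *)
From HB Require Import structures.
From mathcomp Require Import all_boot all_order all_algebra.
From mathcomp Require Import all_classical all_reals all_analysis.
Set Implicit Arguments.
Unset Strict Implicit.
Unset Printing Implicit Defensive.
Import Order.TTheory GRing.Theory Num.Theory.
Import numFieldNormedType.Exports.
Local Open Scope ring_scope.
Local Open Scope classical_set_scope.

(* X = {1,...,d} is modelled by 'I_d; R^X by row vectors 'rV[R]_d
   (mu 0 x is the x-coordinate of mu). *)

Section Defs.
Context (R : realType) (d : nat).

Definition Pspace : set 'rV[R]_d :=
  [set mu | (forall x, 0 <= mu 0 x) /\ \sum_(x < d) mu 0 x = 1].

(* Borel sigma-algebra on R^X (generated by the open sets); probability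
   measures on P(X) are the Borel probabilities on R^X concentrated on P(X). *)
Definition borelRd := g_sigma_algebraType (fun A : set 'rV[R]_d => open A).

Definition is_prob (T : finType) (m : T -> R) :=
  (forall t, 0 <= m t) /\ \sum_t m t = 1.

Definition empirical (N : nat) (x : {ffun 'I_N -> 'I_d}) : 'rV[R]_d :=
  \row_(y < d) ((N%:R)^-1 * \sum_(i < N) ((x i == y)%:R)).

Definition Ufun (K : 'rV[R]_d -> 'I_d -> R) (mu : 'rV[R]_d) : R :=
  \sum_(x < d) mu 0 x * K mu x.

(* F(mu) = sum_x mu_x log mu_x + U(mu)   (ln 0 = 0, so 0 log 0 = 0) *)
Definition Ffun (K : 'rV[R]_d -> 'I_d -> R) (mu : 'rV[R]_d) : R :=
  \sum_(x < d) mu 0 x * ln (mu 0 x) + Ufun K mu.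

Definition F0 (K : 'rV[R]_d -> 'I_d -> R) : R := inf [set Ffun K mu | mu in Pspace].

Definition gibbsZ (K : 'rV[R]_d -> 'I_d -> R) (N : nat) : R :=
  \sum_(x : {ffun 'I_N -> 'I_d}) expR (- (N%:R * Ufun K (empirical x))).

Definition gibbs (K : 'rV[R]_d -> 'I_d -> R) (N : nat) (x : {ffun 'I_N -> 'I_d}) : R :=
  expR (- (N%:R * Ufun K (empirical x))) / gibbsZ K N.

Definition C2_on (O : set 'rV[R]_d) (f : 'rV[R]_d -> R) : Prop :=
  (forall v, O v -> {for v, continuous f}) /\
  forall (i j : 'I_d) v, O v ->
    [/\ derivable f v 'e_i,
        {for v, continuous (fun w => 'D_'e_i f w)},
        derivable (fun w => 'D_'e_i f w) v 'e_j &
        {for v, continuous (fun w => 'D_'e_j (fun u => 'D_'e_i f u) w)}].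

(* weak convergence L^N_# mu^N -> M: for every bounded continuous
   phi : P(X) -> R, int phi d(L^N_# mu^N) = sum_x mu^N_x phi(L^N x)
   converges to int phi dM. *)
Definition weak_cvg_pushforward (mu : forall N : nat, {ffun 'I_N -> 'I_d} -> R)
    (M : probability borelRd R) : Prop :=
  forall phi : 'rV[R]_d -> R,
    {within Pspace, continuous phi} ->
    (exists C : R, forall nu, Pspace nu -> `|phi nu| <= C) ->
    (fun N => (\sum_(x : {ffun 'I_N -> 'I_d}) mu N x * phi (empirical x))%:E)
      @ \oo --> (\int[M]_(nu in (Pspace : set borelRd)) (phi nu)%:E)%E.

End Defs.

Definition rel_entropy (R : realType) (T : finType) (m p : T -> R) : R :=
  \sum_t m t * ln (m t / p t).

(* Main.v *)
Require Import Defs.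
From HB Require Import structures.
From mathcomp Require Import all_boot all_order all_algebra.
From mathcomp Require Import all_classical all_reals all_analysis.
Import Order.TTheory GRing.Theory Num.Theory.
Import numFieldNormedType.Exports.
From mathcomp Require Import ring lra.
Local Open Scope ring_scope.
Local Open Scope classical_set_scope.
Lemma ln_le_lin (R : realType) (y e : R) : 0 < y -> 0 < e ->
  2 * y <= (e * y) ^+ 2 -> ln y <= e * y.
Proof.
move=> y0 e0 h.
have ey0 : 0 < e * y by rewrite mulr_gt0.
have : y <= expR (e * y).
  apply: le_trans (expR_ge1Dxn 1 (ltW ey0)).
  have -> : (1.+1)`!%:R = 2 :> R by [].
  apply: le_trans (_ : (e * y) ^+ 2 / 2 <= _); last by rewrite lerDr.
  by rewrite ler_pdivlMr // mulrC.
rewrite -(ler_ln (x:=y)) ?posrE ?expR_gt0 //.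
by rewrite expRK.
Qed.

Lemma xlnx_small (R : realType) (t e : R) : 0 < t -> t <= 1 -> 0 < e ->
  2 * t <= e ^+ 2 -> `|t * ln t| <= e.
Proof.
move=> t0 t1 e0 h.
have lnt : ln t <= 0 by rewrite ln_le0.
rewrite ler0_norm; last by rewrite mulr_ge0_le0 // ltW.
have it0 : 0 < t^-1 by rewrite invr_gt0.
have := @ln_le_lin R t^-1 e it0 e0.
rewrite lnV ?posrE // => H.
have : - ln t <= e * t^-1.
  apply: H.
  have -> : 2 * t^-1 = (2 * t) * (t^-1 ^+ 2) by field; rewrite lt0r_neq0.
  rewrite exprMn ler_pM2r //; exact: exprn_gt0.
move=> H2.
have -> : - (t * ln t) = t * (- ln t) by ring.
have -> : e = t * (e * t^-1) by field; rewrite lt0r_neq0.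
by rewrite ler_pM2l.
Qed.
Lemma xlnx_cont (R : realType) : continuous (fun t : R => t * ln t).
Proof.
move=> t0.
have [t0p|t0n] := ltP 0 t0.
  apply: continuousM; first exact: cvg_id.
  exact: continuous_ln.
apply/cvgrPdist_lt => e e0.
have ln00 : (0:R) * ln 0 = 0 by rewrite mul0r.
set de := Num.min 1 (e ^+ 2 / 8).
have de0 : 0 < de by rewrite lt_min ltr01 /= divr_gt0 // exprn_gt0.
have := @cvg_id _ (nbhs t0).
move/cvgrPdist_lt/(_ de de0).
apply: filterS => t Ht.
rewrite (ln0 t0n) mulr0 sub0r normrN.
have [tp|tn] := ltP 0 t; last by rewrite (ln0 tn) mulr0 normr0.
have tde : t < de.
  move: Ht; rewrite distrC => Ht.
  have := ler_norm (t - t0); rewrite -/(_ <= _)%R => H.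
  have : t - t0 < de by exact: le_lt_trans H Ht.
  lra.
apply: (le_lt_trans (@xlnx_small _ t (e / 2) tp _ _ _)).
- apply: ltW; apply: lt_le_trans tde _; by rewrite ge_min lexx.
- by rewrite divr_gt0.
- have : de <= e ^+ 2 / 8 by by rewrite ge_min lexx orbT.
  have -> : (e / 2) ^+ 2 = e ^+ 2 / 4 by field.
  lra.
- lra.
Qed.
Lemma sum_cont (R : realType) (T : topologicalType) (I : finType)
  (f : I -> T -> R) (v : T) :
  (forall i, {for v, continuous (f i)}) ->
  {for v, continuous (fun w => \sum_i f i w)}.
Proof.
move=> H.
suff : forall s, {for v, continuous (fun w => \sum_(i <- s) f i w)} by apply.
elim => [|i s IH].
  have -> : (fun w => \sum_(i <- [::]) f i w) = (fun=> 0) :> (T -> R).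
    by apply/funext => w; rewrite big_nil.
  exact: cvg_cst.
have -> : (fun w => \sum_(j <- i :: s) f j w) =
    (f i + (fun w => \sum_(j <- s) f j w)) :> (T -> R).
  by apply/funext => w; rewrite big_cons.
exact: continuousD.
Qed.

Lemma Pspace_entry (R : realType) d (v : 'rV[R]_d) x :
  Pspace v -> 0 <= v 0 x <= 1.
Proof.
move=> [H0 H1]; rewrite H0 /= -H1 (bigD1 x) //= lerDl.
by apply: sumr_ge0 => i _; exact: H0.
Qed.

Lemma Pspace_compact (R : realType) d : compact (@Pspace R d).
Proof.
apply: bounded_closed_compact.
  exists 1; split => // M M1 v Pv.
  change (mx_norm v <= M); rewrite mx_normrE.
  apply: bigmax_le; first by apply: ltW; apply: lt_trans M1.
  move=> [i j] _ /=.
  rewrite (ord1 i).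
  have /andP[h0 h1] := Pspace_entry _ _ _ j Pv.
  rewrite ger0_norm //; apply: ltW; exact: le_lt_trans h1 M1.
have -> : @Pspace R d = (\bigcap_(x in [set: 'I_d]) [set v : 'rV[R]_d | 0 <= v 0 x])
   `&` [set v : 'rV[R]_d | \sum_(x < d) v 0 x = 1].
  apply/seteqP; split => v.
    by move=> [H0 H1]; split => // x _; exact: H0.
  by move=> [H0 H1]; split => // x; exact: H0.
apply: closedI.
  apply: closed_bigI => x _.
  apply: (@preimage_closed _ _ (fun v : 'rV[R]_d => v 0 x) [set y | 0 <= y]).
    by move=> v _; exact: coord_continuous.
  exact: closed_ge.
apply: (@preimage_closed _ _ (fun v : 'rV[R]_d => \sum_(x < d) v 0 x) [set y | y = 1]).
  move=> v _; apply: sum_cont => x; exact: coord_continuous.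
exact: closed_eq.
Qed.

Lemma cont_bounded (R : realType) d (f : 'rV[R]_d -> R) :
  {within @Pspace R d, continuous f} ->
  exists C, 0 <= C /\ forall v, Pspace v -> `|f v| <= C.
Proof.
move=> fc.
have := compact_bounded (continuous_compact fc (@Pspace_compact R d)).
move=> [M [Mreal HM]].
have M1 : M < `|M| + 1 by apply: le_lt_trans (real_ler_norm Mreal) _; rewrite ltrDl.
exists (`|M| + 1); split; first by rewrite addr_ge0.
move=> v Pv; apply: (HM _ M1); by exists v.
Qed.
Definition Efun (R : realType) d (v : 'rV[R]_d) : R := \sum_(x < d) v 0 x * ln (v 0 x).
Arguments Efun {R d} v.

Lemma FfunE (R : realType) d (K : 'rV[R]_d -> 'I_d -> R) v :
  Ffun K v = Efun v + Ufun K v.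
Proof. by []. Qed.

Lemma Efun_cont (R : realType) d (v : 'rV[R]_d) : {for v, continuous (@Efun R d)}.
Proof.
apply: sum_cont => x.
apply: (@continuous_comp _ _ _ (fun w : 'rV[R]_d => w 0 x) (fun t : R => t * ln t)).
  exact: coord_continuous.
exact: xlnx_cont.
Qed.

Lemma Ufun_cont (R : realType) d (K : 'rV[R]_d -> 'I_d -> R) (O : set 'rV[R]_d) v :
  (forall x, C2_on O (fun mu => K mu x)) -> O v -> {for v, continuous (Ufun K)}.
Proof.
move=> HK Ov; apply: sum_cont => x.
apply: continuousM; first exact: coord_continuous.
by have [H _] := HK x; exact: H.
Qed.

Lemma within_P (R : realType) d (f : 'rV[R]_d -> R) :
  (forall v, Pspace v -> {for v, continuous f}) -> {within @Pspace R d, continuous f}.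
Proof.
move=> H; apply: continuous_in_subspaceT => v; rewrite inE => Pv; exact: H.
Qed.
Lemma gibbs_term (R : realType) (r s : R) : 0 <= r -> 0 <= s -> (0 < r -> 0 < s) ->
  r * ln s <= r * ln r + (s - r).
Proof.
move=> r0 s0 rs.
have [rp|] := ltP 0 r; last first.
  move=> r0'; have -> : r = 0 by apply/eqP; rewrite eq_le r0' r0.
  by rewrite !mul0r add0r subr0.
have sp := rs rp.
have : ln (s / r) <= s / r - 1.
  have h1 : -1 < s / r - 1.
    have : 0 < s / r by rewrite divr_gt0.
    lra.
  by have := le_ln1Dx h1; rewrite addrC subrK.
rewrite ln_div ?posrE // => H.
have : r * (ln s - ln r) <= r * (s / r - 1) by rewrite ler_pM2l.
have -> : r * (s / r - 1) = s - r by field; rewrite lt0r_neq0.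
lra.
Qed.

Lemma gibbs_ineq (R : realType) (T : finType) (r s : T -> R) :
  (forall t, 0 <= r t) -> \sum_t r t = 1 -> (forall t, 0 <= s t) ->
  (forall t, 0 < r t -> 0 < s t) -> \sum_t s t <= 1 ->
  \sum_t r t * ln (s t) <= \sum_t r t * ln (r t).
Proof.
move=> r0 r1 s0 rs s1.
apply: (@le_trans _ _ (\sum_t (r t * ln (r t) + (s t - r t)))).
  by apply: ler_sum => t _; apply: gibbs_term; [exact: r0|exact: s0|exact: rs].
rewrite big_split /= sumrB r1; lra.
Qed.
Lemma prod_sum (R : realType) N d (G : 'I_N -> 'I_d -> R) :
  \sum_(x : {ffun 'I_N -> 'I_d}) \prod_k G k (x k) = \prod_k \sum_a G k a.
Proof. by rewrite bigA_distr_bigA. Qed.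

Lemma prod_sumH (R : realType) N d (p : 'I_d -> R) (H : 'I_N -> 'I_d -> R) :
  \sum_(x : {ffun 'I_N -> 'I_d}) (\prod_k p (x k)) * \prod_k H k (x k) =
  \prod_k \sum_a p a * H k a.
Proof.
rewrite -prod_sum; apply: eq_bigr => x _; by rewrite -big_split.
Qed.

Lemma marg1 (R : realType) N d (p g : 'I_d -> R) (i : 'I_N) :
  \sum_a p a = 1 ->
  \sum_(x : {ffun 'I_N -> 'I_d}) (\prod_k p (x k)) * g (x i) = \sum_a p a * g a.
Proof.
move=> p1.
transitivity (\sum_(x : {ffun 'I_N -> 'I_d}) (\prod_k p (x k)) *
    \prod_k (if k == i then g (x k) else 1)).
  apply: eq_bigr => x _; congr (_ * _).
  rewrite (bigD1 i) //= eqxx big1 ?mulr1 // => k /negbTE ->; done.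
rewrite (@prod_sumH _ _ _ p (fun k a => if k == i then g a else 1)).
rewrite (bigD1 i) //= eqxx [X in _ * X]big1 ?mulr1.
  by apply: eq_bigr => a _; rewrite ?eqxx.
move=> k /negbTE ->; rewrite -[RHS]p1; apply: eq_bigr => a _; by rewrite mulr1.
Qed.

Lemma marg2 (R : realType) N d (p g h : 'I_d -> R) (i j : 'I_N) :
  \sum_a p a = 1 -> i != j ->
  \sum_(x : {ffun 'I_N -> 'I_d}) (\prod_k p (x k)) * (g (x i) * h (x j)) =
  (\sum_a p a * g a) * (\sum_a p a * h a).
Proof.
move=> p1 ij.
transitivity (\sum_(x : {ffun 'I_N -> 'I_d}) (\prod_k p (x k)) *
    \prod_k ((if k == i then g (x k) else 1) * (if k == j then h (x k) else 1))).
  apply: eq_bigr => x _; congr (_ * _).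
  rewrite big_split /=.
  rewrite (bigD1 i) //= eqxx big1 ?mulr1; last by move=> k /negbTE ->.
  rewrite (bigD1 j) //= eqxx big1 ?mulr1 //; by move=> k /negbTE ->.
rewrite (@prod_sumH _ _ _ p (fun k a => (if k == i then g a else 1) * (if k == j then h a else 1))).
rewrite (bigD1 i) //= (bigD1 j) /=; last by rewrite eq_sym.
rewrite [X in _ * (_ * X)]big1; last first.
  move=> k /andP[ki kj]; rewrite -[RHS]p1; apply: eq_bigr => a _.
  by rewrite (negbTE ki) (negbTE kj) !mulr1.
rewrite mulr1; congr (_ * _); apply: eq_bigr => a _.
  by rewrite ?eqxx (negbTE ij) mulr1.
by rewrite ?eqxx eq_sym (negbTE ij) mul1r.
Qed.

Lemma prod_prob (R : realType) N d (p : 'I_d -> R) :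
  \sum_a p a = 1 ->
  \sum_(x : {ffun 'I_N -> 'I_d}) \prod_k p (x k) = 1.
Proof.
move=> p1; rewrite (@prod_sum _ _ _ (fun k a => p a)); under eq_bigr do rewrite p1.
by rewrite prodr_const expr1n.
Qed.
Lemma empE (R : realType) d N (x : {ffun 'I_N -> 'I_d}) y :
  empirical R x 0 y = (N%:R)^-1 * \sum_(i < N) ((x i == y)%:R : R).
Proof. by rewrite /empirical mxE. Qed.

Lemma sum_eq1 (R : realType) d (z : 'I_d) : \sum_(y < d) ((z == y)%:R : R) = 1.
Proof.
rewrite (bigD1 z) //= eqxx big1 ?addr0 // => y yz.
by rewrite eq_sym (negbTE yz).
Qed.

Lemma emp_sumi (R : realType) d N (x : {ffun 'I_N -> 'I_d}) (f : 'I_d -> R) :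
  (0 < N)%N ->
  \sum_(i < N) f (x i) = N%:R * \sum_(y < d) empirical R x 0 y * f y.
Proof.
move=> N0.
have NR : (N%:R : R) != 0 by rewrite pnatr_eq0 -lt0n.
transitivity (\sum_(i < N) \sum_(y < d) ((x i == y)%:R * f y)).
  apply: eq_bigr => i _; rewrite (bigD1 (x i)) //= eqxx mul1r big1 ?addr0 //.
  by move=> y yx; rewrite eq_sym (negbTE yx) mul0r.
rewrite exchange_big /= mulr_sumr; apply: eq_bigr => y _.
by rewrite empE !mulrA mulfV // mul1r mulr_suml.
Qed.

Lemma emp_P (R : realType) d N (x : {ffun 'I_N -> 'I_d}) :
  (0 < N)%N -> Pspace (empirical R x).
Proof.
move=> N0; split.
  move=> y; rewrite empE; apply: mulr_ge0; first by rewrite invr_ge0.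
  by apply: sumr_ge0.
have := @emp_sumi R d N x (fun=> 1) N0.
rewrite sumr_const card_ord.
under [X in _ = _ * X]eq_bigr do rewrite mulr1.
move=> H.
have NR : (N%:R : R) != 0 by rewrite pnatr_eq0 -lt0n.
apply: (mulfI NR); by rewrite -H mulr1.
Qed.

Lemma emp_entry_pos (R : realType) d N (x : {ffun 'I_N -> 'I_d}) i :
  0 < empirical R x 0 (x i).
Proof.
have N0 : (0 < N)%N := leq_ltn_trans (leq0n i) (ltn_ord i).
rewrite empE; apply: mulr_gt0; first by rewrite invr_gt0 ltr0n.
rewrite (bigD1 i) //= eqxx; apply: (lt_le_trans ltr01); rewrite lerDl.
by apply: sumr_ge0 => *.
Qed.
Lemma ln_prod (R : realType) (I : Type) (s : seq I) (f : I -> R) :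
  (forall i, 0 < f i) -> ln (\prod_(i <- s) f i) = \sum_(i <- s) ln (f i).
Proof.
move=> fp; elim: s => [|i s IH]; first by rewrite !big_nil ln1.
rewrite !big_cons lnM ?IH // posrE //.
by apply: prodr_gt0 => j _.
Qed.

Definition qf (R : realType) d N (x : {ffun 'I_N -> 'I_d}) : R :=
  \prod_(i < N) empirical R x 0 (x i).
Arguments qf R {d N} x.

Lemma qf_pos (R : realType) d N (x : {ffun 'I_N -> 'I_d}) : 0 < qf R x.
Proof. by apply: prodr_gt0 => i _; exact: emp_entry_pos. Qed.
Arguments qf_pos R {d N} x.

Lemma ln_qf (R : realType) d N (x : {ffun 'I_N -> 'I_d}) : (0 < N)%N ->
  ln (qf R x) = N%:R * Efun (empirical R x).
Proof.
move=> N0; rewrite /qf ln_prod; last by move=> i; exact: emp_entry_pos.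
by rewrite (@emp_sumi R d N x (fun y => ln (empirical R x 0 y))).
Qed.

Definition cnt d N (x : {ffun 'I_N -> 'I_d}) : {ffun 'I_d -> 'I_N.+1} :=
  [ffun y => inord (\sum_(i < N) (x i == y))%N].
Arguments cnt {d N} x.

Lemma cnt_val d N (x : {ffun 'I_N -> 'I_d}) y :
  (cnt x y : nat) = (\sum_(i < N) (x i == y))%N.
Proof.
rewrite ffunE inordK // ltnS.
apply: (@leq_trans (\sum_(i < N) 1)%N).
  by apply: leq_sum => i _; exact: leq_b1.
by rewrite sum_nat_const card_ord muln1.
Qed.

Lemma emp_cnt (R : realType) d N (x : {ffun 'I_N -> 'I_d}) y :
  empirical R x 0 y = (N%:R)^-1 * ((cnt x y : nat)%:R).
Proof. by rewrite empE cnt_val natr_sum. Qed.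

Definition Gc (R : realType) d N (c : {ffun 'I_d -> 'I_N.+1}) (x : {ffun 'I_N -> 'I_d}) : R :=
  \prod_(i < N) ((N%:R)^-1 * ((c (x i) : nat)%:R)).
Arguments Gc R {d N} c x.

Lemma Gc_ge0 (R : realType) d N c (x : {ffun 'I_N -> 'I_d}) : 0 <= Gc R c x.
Proof.
apply: prodr_ge0 => i _; apply: mulr_ge0 => //; by rewrite invr_ge0.
Qed.

Lemma sum_qf (R : realType) d N : (0 < N)%N ->
  \sum_(x : {ffun 'I_N -> 'I_d}) qf R x <= (N.+1%:R) ^+ d.
Proof.
move=> N0.
have -> : \sum_(x : {ffun 'I_N -> 'I_d}) qf R x =
    \sum_(x : {ffun 'I_N -> 'I_d}) \sum_(c : {ffun 'I_d -> 'I_N.+1})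
    ((c == cnt x)%:R * Gc R c x).
  apply: eq_bigr => x _.
  rewrite (bigD1 (cnt x)) //= eqxx mul1r big1 ?addr0.
    by rewrite /qf /Gc; apply: eq_bigr => i _; rewrite emp_cnt.
  by move=> c /negbTE ->; rewrite mul0r.
rewrite exchange_big /=.
apply: (@le_trans _ _ (\sum_(c : {ffun 'I_d -> 'I_N.+1}) (1 : R))); last first.
  rewrite sumr_const card_ffun !card_ord -natrX; exact: lexx.
apply: ler_sum => c _.
case: (pickP (fun x => c == cnt x)) => [x0 /eqP -> | H]; last first.
  rewrite big1 // => x _; by rewrite H mul0r.
apply: (@le_trans _ _ (\sum_(x : {ffun 'I_N -> 'I_d}) Gc R (cnt x0) x)).
  apply: ler_sum => x _; case: (_ == _) => /=; first by rewrite mul1r.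
  by rewrite mul0r; exact: Gc_ge0.
rewrite /Gc (@prod_sum R N d (fun k a => (N%:R)^-1 * ((cnt x0 a : nat)%:R))).
rewrite big1 //= => k _.
have [_ H1] := @emp_P R d N x0 N0.
rewrite -[RHS]H1.
by apply: eq_bigr => a _; rewrite emp_cnt.
Qed.
Lemma entropy_lb (R : realType) d N (m : {ffun 'I_N -> 'I_d} -> R) : (0 < N)%N ->
  is_prob m ->
  N%:R * \sum_x m x * Efun (empirical R x) - d%:R * ln (N.+1%:R) <=
  \sum_x m x * ln (m x).
Proof.
move=> N0 [m0 m1].
set D : R := (N.+1%:R) ^+ d.
have D0 : 0 < D by rewrite exprn_gt0 // ltr0n.
have H := @gibbs_ineq R _ m (fun x => qf R x / D) m0 m1.
have := H (fun x => divr_ge0 (ltW (qf_pos R x)) (ltW D0))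
  (fun x _ => divr_gt0 (qf_pos R x) D0).
have Hs : \sum_(x : {ffun 'I_N -> 'I_d}) qf R x / D <= 1.
  rewrite -mulr_suml.
  by rewrite ler_pdivrMr // mul1r sum_qf.
move=> /(_ Hs); apply: le_trans.
have e : forall x, m x * ln (qf R x / D) =
    N%:R * (m x * Efun (empirical R x)) - m x * (d%:R * ln (N.+1%:R)).
  move=> x; rewrite ln_div ?posrE ?qf_pos // ln_qf // /D lnXn ?ltr0n //.
  rewrite -mulr_natl; ring.
rewrite (eq_bigr _ (fun x _ => e x)).
rewrite sumrB -mulr_sumr -mulr_suml m1 mul1r.
exact: lexx.
Qed.
Definition rp (R : realType) d N (v : 'rV[R]_d) (x : {ffun 'I_N -> 'I_d}) : R :=
  \prod_(k < N) v 0 (x k).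
Arguments rp {R d N} v x.

Lemma rp_ge0 (R : realType) d N (v : 'rV[R]_d) (x : {ffun 'I_N -> 'I_d}) :
  Pspace v -> 0 <= rp v x.
Proof. by move=> [H _]; apply: prodr_ge0 => k _; exact: H. Qed.

Lemma rp_sum1 (R : realType) d N (v : 'rV[R]_d) :
  Pspace v -> \sum_(x : {ffun 'I_N -> 'I_d}) rp v x = 1.
Proof. by move=> [_ H]; exact: (@prod_prob R N d (fun a => v 0 a)). Qed.

Lemma rp_marg1 (R : realType) d N (v : 'rV[R]_d) (g : 'I_d -> R) (i : 'I_N) :
  Pspace v -> \sum_(x : {ffun 'I_N -> 'I_d}) rp v x * g (x i) = \sum_a v 0 a * g a.
Proof. by move=> [_ H]; exact: (@marg1 R N d (fun a => v 0 a)). Qed.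

Lemma rp_marg2 (R : realType) d N (v : 'rV[R]_d) (g h : 'I_d -> R) (i j : 'I_N) :
  Pspace v -> i != j ->
  \sum_(x : {ffun 'I_N -> 'I_d}) rp v x * (g (x i) * h (x j)) =
  (\sum_a v 0 a * g a) * (\sum_a v 0 a * h a).
Proof. by move=> [_ H]; exact: (@marg2 R N d (fun a => v 0 a)). Qed.

Lemma rlnr (R : realType) d N (v : 'rV[R]_d) : Pspace v ->
  \sum_(x : {ffun 'I_N -> 'I_d}) rp v x * ln (rp v x) = N%:R * Efun v.
Proof.
move=> Pv.
have e : forall x : {ffun 'I_N -> 'I_d},
    rp v x * ln (rp v x) = rp v x * \sum_(k < N) ln (v 0 (x k)).
  move=> x; case: (boolP [forall k, 0 < v 0 (x k)]) => [/forallP H|].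
    by rewrite /rp ln_prod.
  move=> /forallPn [k hk].
  have vk : v 0 (x k) = 0.
    have /andP[h0 _] := Pspace_entry _ _ _ (x k) Pv.
    by apply/eqP; rewrite eq_le h0 andbT leNgt.
  have -> : rp v x = 0 by rewrite /rp (bigD1 k) //= vk mul0r.
  by rewrite !mul0r.
rewrite (eq_bigr _ (fun x _ => e x)).
under eq_bigr do rewrite mulr_sumr.
rewrite exchange_big /=.
rewrite (eq_bigr (fun _ => Efun v)); last first.
  move=> k _; exact: (@rp_marg1 R d N v (fun a => ln (v 0 a)) k Pv).
by rewrite sumr_const card_ord mulr_natl.
Qed.

Lemma gibbsZ_pos (R : realType) d (K : 'rV[R]_d -> 'I_d -> R) N
  (x0 : {ffun 'I_N -> 'I_d}) : 0 < gibbsZ K N.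
Proof.
rewrite /gibbsZ (bigD1 x0) //=.
set a := expR _; set b := \sum_(_ | _) _.
have ha : 0 < a by exact: expR_gt0.
have hb : 0 <= b by apply: sumr_ge0 => x _; exact: expR_ge0.
lra.
Qed.

Lemma Z_lb (R : realType) d (K : 'rV[R]_d -> 'I_d -> R) N (v : 'rV[R]_d) :
  (0 < N)%N -> Pspace v ->
  - (N%:R * Efun v) - N%:R * \sum_(x : {ffun 'I_N -> 'I_d}) rp v x * Ufun K (empirical R x)
    <= ln (gibbsZ K N).
Proof.
move=> N0 Pv.
have d0 : (0 < d)%N.
  case: d K v Pv => // K v [_ H]; move: H; rewrite big_ord0 => /eqP.
  by rewrite eq_sym oner_eq0.
pose x0 : {ffun 'I_N -> 'I_d} := [ffun _ => Ordinal d0].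
have Z0 := @gibbsZ_pos R d K N x0.
have H := @gibbs_ineq R _ (rp v) (@gibbs R d K N) (fun x => @rp_ge0 R d N v x Pv) (@rp_sum1 R d N v Pv).
have gp : forall x, 0 < @gibbs R d K N x.
  by move=> x; rewrite /gibbs divr_gt0 // expR_gt0.
have := H (fun x => ltW (gp x)) (fun x _ => gp x).
have Hs : \sum_(x : {ffun 'I_N -> 'I_d}) @gibbs R d K N x <= 1.
  rewrite /gibbs -mulr_suml -/(gibbsZ K N) mulfV //; exact: lt0r_neq0.
move=> /(_ Hs); rewrite rlnr //.
have e : forall x, rp v x * ln (@gibbs R d K N x) =
    - N%:R * (rp v x * Ufun K (empirical R x)) - rp v x * ln (gibbsZ K N).
  move=> x; rewrite /gibbs ln_div ?posrE ?expR_gt0 // expRK; ring.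
rewrite (eq_bigr _ (fun x _ => e x)) sumrB -mulr_sumr -mulr_suml rp_sum1 // mul1r.
lra.
Qed.
Lemma rp_var (R : realType) d N (v : 'rV[R]_d) y : (0 < N)%N -> Pspace v ->
  \sum_(x : {ffun 'I_N -> 'I_d}) rp v x * (empirical R x 0 y - v 0 y) ^+ 2
    <= (N%:R)^-1.
Proof.
move=> N0 Pv.
have NR : (N%:R : R) != 0 by rewrite pnatr_eq0 -lt0n.
pose a (z : 'I_d) : R := (z == y)%:R - v 0 y.
have sa : \sum_z v 0 z * a z = 0.
  have [_ H1] := Pv.
  rewrite /a; under eq_bigr do rewrite mulrBr.
  rewrite sumrB -mulr_suml H1 mul1r (bigD1 y) //= eqxx mulr1 big1 ?addr0 ?subrr //.
  by move=> z /negbTE ->; rewrite mulr0.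
have a2 : forall z, a z * a z <= 1.
  move=> z; have /andP[h0 h1] := Pspace_entry _ _ _ y Pv.
  rewrite /a; case: (z == y) => /=; nra.
have sq : forall x : {ffun 'I_N -> 'I_d}, (empirical R x 0 y - v 0 y) ^+ 2 =
    (N%:R)^-2 * \sum_(i < N) \sum_(j < N) a (x i) * a (x j).
  move=> x.
  have -> : empirical R x 0 y - v 0 y = (N%:R)^-1 * \sum_(i < N) a (x i).
    rewrite empE /a sumrB sumr_const card_ord -mulr_natl; field.
    exact: NR.
  rewrite exprMn exprVn; congr (_ * _); rewrite expr2 mulr_suml.
  by apply: eq_bigr => i _; rewrite mulr_sumr.
under eq_bigr do rewrite sq.
have e2 : \sum_(x : {ffun 'I_N -> 'I_d}) rp v x * ((N%:R)^-2 *
      \sum_(i < N) \sum_(j < N) a (x i) * a (x j)) =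
    (N%:R)^-2 * \sum_(i < N) \sum_(j < N)
      \sum_(x : {ffun 'I_N -> 'I_d}) rp v x * (a (x i) * a (x j)).
  transitivity ((N%:R)^-2 * \sum_(x : {ffun 'I_N -> 'I_d}) \sum_(i < N)
      \sum_(j < N) rp v x * (a (x i) * a (x j))).
    rewrite mulr_sumr; apply: eq_bigr => x _; rewrite mulrCA; congr (_ * _).
    rewrite mulr_sumr; apply: eq_bigr => i _; by rewrite mulr_sumr.
  congr (_ * _); rewrite exchange_big /=; apply: eq_bigr => i _.
  by rewrite exchange_big.
rewrite e2.
have b : \sum_(i < N) \sum_(j < N)
      \sum_(x : {ffun 'I_N -> 'I_d}) rp v x * (a (x i) * a (x j)) <= N%:R.
  apply: (@le_trans _ _ (\sum_(i < N) (1:R))); last by rewrite sumr_const card_ord.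
  apply: ler_sum => i _.
  rewrite (bigD1 i) //= [X in _ + X]big1 ?addr0.
    move: (@rp_marg1 R d N v (fun z => a z * a z) i Pv) => /= ->.
    have [H0 H1] := Pv.
    rewrite -[leRHS]H1; apply: ler_sum => z _.
    by rewrite -[leRHS]mulr1 ler_wpM2l.
  move=> j ij; rewrite (@rp_marg2 R d N v a a i j Pv); last by rewrite eq_sym.
  by rewrite sa mul0r.
have Np : (0 : R) < N%:R by rewrite ltr0n.
apply: (@le_trans _ _ ((N%:R)^-2 * N%:R)).
  apply: ler_wpM2l b; by rewrite invr_ge0 exprn_ge0 // ler0n.
rewrite expr2 invfM -mulrA mulVf //; rewrite mulr1; exact: lexx.
Qed.
Lemma U_dev (R : realType) d (U : 'rV[R]_d -> R) (v : 'rV[R]_d) (eps : R) :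
  Pspace v -> 0 < eps -> {for v, continuous U} ->
  (exists B, 0 <= B /\ forall w, Pspace w -> `|U w| <= B) ->
  exists C, 0 <= C /\ forall w, Pspace w ->
    U w <= U v + eps + C * \sum_(y < d) (w 0 y - v 0 y) ^+ 2.
Proof.
move=> Pv e0 Uc [B [B0 HB]].
have := Uc; move/cvgrPdist_lt/(_ eps e0)/nbhs_ballP => [de de0 Hde].
exists (2 * B / de ^+ 2); split.
  by apply: divr_ge0; [apply: mulr_ge0 | apply: exprn_ge0; apply: ltW].
move=> w Pw.
have S0 : 0 <= \sum_(y < d) (w 0 y - v 0 y) ^+ 2.
  by apply: sumr_ge0 => y _; exact: sqr_ge0.
have C0 : 0 <= 2 * B / de ^+ 2.
  by apply: divr_ge0; [apply: mulr_ge0 | apply: exprn_ge0; apply: ltW].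
case: (boolP [forall y, `|v 0 y - w 0 y| < de]) => [/forallP H|/forallPn [y hy]].
  have bw : ball v de w.
    rewrite mx_norm_ball /ball_.
    change (mx_norm (v - w) < de); rewrite mx_normrE.
    apply: bigmax_lt => // -[i j] _ /=.
    by rewrite (ord1 i) !mxE; exact: H.
  have := Hde _ bw => /= h.
  have : U w - U v < eps.
    apply: le_lt_trans h; rewrite distrC; exact: ler_norm.
  have : 0 <= 2 * B / de ^+ 2 * \sum_(y < d) (w 0 y - v 0 y) ^+ 2 by exact: mulr_ge0.
  lra.
have hy' : de <= `|v 0 y - w 0 y| by rewrite leNgt.
have h2 : de ^+ 2 <= \sum_(y < d) (w 0 y - v 0 y) ^+ 2.
  apply: (@le_trans _ _ ((w 0 y - v 0 y) ^+ 2)).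
    rewrite -(real_normK (num_real (w 0 y - v 0 y))) distrC.
    by rewrite ler_pXn2r // ?nnegrE // ltW.
  rewrite (bigD1 y) //= lerDl; apply: sumr_ge0 => z _; exact: sqr_ge0.
have h3 : 2 * B <= 2 * B / de ^+ 2 * \sum_(y < d) (w 0 y - v 0 y) ^+ 2.
  have dp : 0 < de ^+ 2 by exact: exprn_gt0.
  rewrite -mulrA -[leLHS]mulr1; apply: ler_wpM2l; first by apply: mulr_ge0.
  by rewrite ler_pdivlMl // mulr1.
have := HB w Pw; have := HB v Pv.
move=> /ler_normlP [h4 h5] /ler_normlP [h6 h7].
lra.
Qed.
Lemma relent_split (R : realType) d (K : 'rV[R]_d -> 'I_d -> R) N
  (m : {ffun 'I_N -> 'I_d} -> R) : (0 < N)%N -> is_prob m ->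
  rel_entropy m (@gibbs R d K N) =
  \sum_x m x * ln (m x) + N%:R * \sum_x m x * Ufun K (empirical R x)
  + ln (gibbsZ K N).
Proof.
move=> N0 [m0 m1].
have d0 : (0 < d)%N.
  case: d K m m0 m1 => // K m m0; rewrite (eq_bigr (fun=> 0)) ?big1 //.
    by move/eqP; rewrite eq_sym oner_eq0.
  by move=> x; case: (x (Ordinal N0)).
pose x0 : {ffun 'I_N -> 'I_d} := [ffun _ => Ordinal d0].
have Z0 := @gibbsZ_pos R d K N x0.
have e : forall x, m x * ln (m x / @gibbs R d K N x) =
    m x * ln (m x) + N%:R * (m x * Ufun K (empirical R x)) + m x * ln (gibbsZ K N).
  move=> x; have [mp|] := ltP 0 (m x); last first.
    move=> mx0; have -> : m x = 0 by apply/eqP; rewrite eq_le mx0 m0.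
    by rewrite !mul0r mulr0 !addr0.
  rewrite ln_div ?posrE //; last by rewrite /gibbs divr_gt0 // expR_gt0.
  rewrite /gibbs ln_div ?posrE ?expR_gt0 // expRK; ring.
rewrite /rel_entropy (eq_bigr _ (fun x _ => e x)) !big_split /=.
by rewrite -mulr_sumr -mulr_suml m1 mul1r.
Qed.

Lemma main_N (R : realType) d (K : 'rV[R]_d -> 'I_d -> R) N
  (m : {ffun 'I_N -> 'I_d} -> R) (v : 'rV[R]_d) (eps C : R) :
  (0 < N)%N -> is_prob m -> Pspace v -> 0 <= C ->
  (forall w, Pspace w -> Ufun K w <= Ufun K v + eps + C * \sum_(y < d) (w 0 y - v 0 y) ^+ 2) ->
  \sum_x m x * Ffun K (empirical R x) - Ffun K v - eps
    - (d%:R * ln (N.+1%:R) + C * d%:R) / N%:R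
  <= (N%:R)^-1 * rel_entropy m (@gibbs R d K N).
Proof.
move=> N0 pm Pv C0 HU.
have np : (0 : R) < N%:R by rewrite ltr0n.
have A := @entropy_lb R d N m N0 pm.
have B := @Z_lb R d K N v N0 Pv.
rewrite relent_split //.
set SL := \sum_x m x * ln (m x) in A *.
set SU := \sum_x m x * Ufun K (empirical R x).
set SE := \sum_x m x * Efun (empirical R x) in A.
set LZ := ln (gibbsZ K N) in B *.
set RU := \sum_x rp v x * Ufun K (empirical R x) in B.
have HRU : RU <= Ufun K v + eps + C * d%:R / N%:R.
  apply: (@le_trans _ _ (\sum_(x : {ffun 'I_N -> 'I_d}) rp v x *
      (Ufun K v + eps + C * \sum_(y < d) (empirical R x 0 y - v 0 y) ^+ 2))).
    apply: ler_sum => x _; apply: ler_wpM2l; first exact: rp_ge0.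
    by apply: HU; exact: emp_P.
  under eq_bigr do rewrite mulrDr.
  rewrite big_split /= -mulr_suml rp_sum1 // mul1r lerD2l.
  under eq_bigr do rewrite mulrCA.
  rewrite -mulr_sumr -mulrA; apply: ler_wpM2l => //.
  under eq_bigr do rewrite mulr_sumr.
  rewrite exchange_big /=.
  apply: (@le_trans _ _ (\sum_(y < d) (N%:R : R)^-1)).
    by apply: ler_sum => y _; exact: rp_var.
  rewrite sumr_const -[X in _ *+ X]/(#|'I_d|) card_ord -[leLHS]mulr_natr mulrC; exact: lexx.
have HSF : \sum_x m x * Ffun K (empirical R x) = SE + SU.
  by rewrite /SE /SU -big_split; apply: eq_bigr => x _; rewrite FfunE mulrDr.
rewrite HSF FfunE.
rewrite -[X in X <= _](mulKf (lt0r_neq0 np)).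
apply: ler_wpM2l; first by rewrite invr_ge0 ltW.
have -> : N%:R * (SE + SU - (Efun v + Ufun K v) - eps -
    (d%:R * ln N.+1%:R + C * d%:R) / N%:R) =
    N%:R * SE + N%:R * SU - N%:R * Efun v - N%:R * Ufun K v - N%:R * eps
    - d%:R * ln N.+1%:R - C * d%:R.
  by field; exact: lt0r_neq0.
have : N%:R * RU <= N%:R * Ufun K v + N%:R * eps + C * d%:R.
  have := ler_wpM2l (ltW np) HRU.
  have -> : N%:R * (Ufun K v + eps + C * d%:R / N%:R) =
    N%:R * Ufun K v + N%:R * eps + C * d%:R by field; exact: lt0r_neq0.
  done.
lra.
Qed.
Lemma cN_small (R : realType) (dd C eps : R) : 0 <= dd -> 0 <= C -> 0 < eps ->
  exists K1 : nat, forall N : nat, (K1 <= N)%N ->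
    (dd * ln (N.+1%:R) + C * dd) / N%:R <= eps.
Proof.
move=> dd0 C0 e0.
set eta := eps / (4 * (dd + 1)).
have eta0 : 0 < eta by rewrite divr_gt0 // mulr_gt0 // ltr_pwDr.
set X := 2 / eta ^+ 2 + 2 * C * dd / eps + 1.
have X1 : 1 <= X.
  have : 0 <= 2 / eta ^+ 2 by rewrite divr_ge0 // exprn_ge0 // ltW.
  have : 0 <= 2 * C * dd / eps by rewrite divr_ge0 ?mulr_ge0 // ltW.
  rewrite /X; lra.
exists (Num.Def.trunc X).+1 => N hN.
have nX : X < N%:R.
  have h := @truncnS_gt _ X.
  have h2 : ((Num.Def.trunc X).+1%:R : R) <= N%:R by rewrite ler_nat.
  lra.
set n := N%:R in nX *.
have n0 : 0 < n by lra.
have h1 : ln (N.+1%:R) <= eta * (n + 1).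
  rewrite -natr1 -/n; apply: ln_le_lin => //; first lra.
  rewrite exprMn expr2 mulrA; apply: ler_wpM2r; first lra.
  have : 2 / eta ^+ 2 <= n + 1.
    have : 0 <= 2 * C * dd / eps by rewrite divr_ge0 ?mulr_ge0 // ltW.
    rewrite /X in nX; lra.
  rewrite ler_pdivrMr ?exprn_gt0 // => h; rewrite mulrC; exact: h.
have h2 : dd * ln (N.+1%:R) <= eps / 2 * n.
  apply: (@le_trans _ _ (dd * (eta * (n + 1)))); first by apply: ler_wpM2l.
  have : dd * eta <= eps / 4.
    rewrite /eta mulrA ler_pdivrMr; last by rewrite mulr_gt0 // ltr_pwDr.
    have : 0 <= eps * dd by rewrite mulr_ge0 // ltW.
    have -> : eps / 4 * (4 * (dd + 1)) = eps * dd + eps by field.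
    lra.
  move=> h; have : dd * eta * (n + 1) <= eps / 4 * (n + 1).
    by apply: ler_wpM2r => //; lra.
  have : 1 <= n by apply: le_trans (ltW nX).
  nra.
have h3 : C * dd <= eps / 2 * n.
  have : 2 * C * dd / eps <= n.
    have : 0 <= 2 / eta ^+ 2 by rewrite divr_ge0 // exprn_ge0 // ltW.
    rewrite /X in nX; lra.
  rewrite ler_pdivrMr // => h; nra.
rewrite ler_pdivrMr //; lra.
Qed.
Lemma einf_le (R : realType) (u v : (\bar R)^nat) :
  (exists N0, forall n, (N0 <= n)%N -> (u n <= v n)%E) ->
  (limn_einf u <= limn_einf v)%E.
Proof.
move=> [N0 H]; rewrite !limn_einf_lim.
apply: lee_lim; [exact: is_cvg_einfs|exact: is_cvg_einfs|].
exists N0 => // n /= hn.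
apply: le_ereal_inf_tmp => _ [m /= nm <-].
apply: (@le_trans _ _ (u m)).
  by apply: ereal_inf_lbound; exists m.
apply: H; exact: leq_trans hn nm.
Qed.

Lemma prob_d0 (R : realType) d N (m : {ffun 'I_N -> 'I_d} -> R) :
  (0 < N)%N -> is_prob m -> (0 < d)%N.
Proof.
move=> N0 [m0 m1].
case: d m m0 m1 => // m m0; rewrite (eq_bigr (fun=> 0)) ?big1 //.
  by move/eqP; rewrite eq_sym oner_eq0.
by move=> x; case: (x (Ordinal N0)).
Qed.
Theorem proposition3p9 (R : realType) (d : nat)
  (K : 'rV[R]_d -> 'I_d -> R)
  (HK : exists O : set 'rV[R]_d,
      open O /\ @Pspace R d `<=` O /\ forall x : 'I_d, C2_on O (fun mu => K mu x))
  (mu : forall N : nat, {ffun 'I_N -> 'I_d} -> R)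
  (Hmu : forall N : nat, is_prob (mu N))
  (M : probability (@borelRd R d) R)
  (HM : M (@Pspace R d : set (@borelRd R d)) = 1%E)
  (Hcvg : weak_cvg_pushforward mu M) :
  ((\int[M]_(nu in (@Pspace R d : set (@borelRd R d))) (Ffun K nu - F0 K)%:E
      <= limn_einf (fun N : nat => ((N%:R)^-1 * rel_entropy (mu N) (@gibbs R d K N))%:E))
   /\ \int[M]_(nu in (@Pspace R d : set (@borelRd R d))) (Ffun K nu - F0 K)%:E
      = \int[M]_(nu in (@Pspace R d : set (@borelRd R d))) (Ffun K nu)%:E - (F0 K)%:E)%E.
Proof.
have [Os [_ [PO HC2]]] := HK.
have Fc : forall v, Pspace v -> {for v, continuous (Ffun K)}.
  move=> v Pv.
  have -> : Ffun K = (@Efun R d + Ufun K) by apply/funext => w.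
  apply: continuousD; first exact: Efun_cont.
  exact: (@Ufun_cont R d K Os v HC2 (PO v Pv)).
have FW := @within_P R d _ Fc.
have [CF [CF0 HCF]] := @cont_bounded R d _ FW.
have d0 : (0 < d)%N := @prob_d0 R d 1 (mu 1%N) (ltn0Sn 0) (Hmu 1%N).
pose x1 : {ffun 'I_1 -> 'I_d} := [ffun _ => Ordinal d0].
have Pv0 : Pspace (empirical R x1) := @emp_P R d 1 x1 (ltn0Sn 0).
set I := (\int[M]_(nu in (@Pspace R d : set (@borelRd R d))) (Ffun K nu)%:E)%E.
set a := fun N => \sum_(x : {ffun 'I_N -> 'I_d}) mu N x * Ffun K (empirical R x).
have H1 : (fun N => (a N)%:E) @ \oo --> I.
  apply: Hcvg => //; exists CF; exact: HCF.
have H2 := Hcvg (fun nu => Ffun K nu - F0 K).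
have H2' : (fun N => (\sum_(x : {ffun 'I_N -> 'I_d}) mu N x *
      (Ffun K (empirical R x) - F0 K))%:E) @ \oo -->
    (\int[M]_(nu in (@Pspace R d : set (@borelRd R d))) (Ffun K nu - F0 K)%:E)%E.
  apply: H2.
    apply: (@within_P R d) => v Pv; apply: continuousB; first exact: Fc.
    exact: cst_continuous.
  exists (CF + `|F0 K|) => nu Pnu.
  apply: (le_trans (ler_normB _ _)); apply: lerD => //; exact: HCF.
have seqE : (fun N => (\sum_(x : {ffun 'I_N -> 'I_d}) mu N x *
      (Ffun K (empirical R x) - F0 K))%:E) = (fun N => ((a N)%:E - (F0 K)%:E)%E).
  apply/funext => N; have [_ m1] := Hmu N.
  rewrite -EFinB; congr (_%:E).
  under eq_bigr do rewrite mulrBr.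
  by rewrite sumrB -mulr_suml m1 mul1r.
have H3 : (fun N => ((a N)%:E - (F0 K)%:E)%E) @ \oo --> (I - (F0 K)%:E)%E.
  apply: cvgeB => //; last exact: cvg_cst.
  by rewrite fin_num_adde_defl.
have E2 : (\int[M]_(nu in (@Pspace R d : set (@borelRd R d))) (Ffun K nu - F0 K)%:E)%E
    = (I - (F0 K)%:E)%E.
  rewrite seqE in H2'.
  exact: (cvg_unique (@ereal_hausdorff R) H2' H3).
split; last exact: E2.
rewrite E2.
apply/lee_addgt0Pr => e e0.
set eps := e / 3.
have eps0 : 0 < eps by rewrite divr_gt0.
have hinf : has_inf [set Ffun K mu | mu in (@Pspace R d)].
  split; first by exists (Ffun K (empirical R x1)); exists (empirical R x1).
  exists (- CF) => _ [w Pw <-].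
  have := HCF w Pw; rewrite ler_norml => /andP[] //.
have [_ [v Pv <-] Fv] := inf_adherent eps0 hinf.
rewrite -/(F0 K) in Fv.
have Ubd : exists B, 0 <= B /\ forall w, Pspace w -> `|Ufun K w| <= B.
  apply: (@cont_bounded R d); apply: (@within_P R d) => w Pw.
  exact: (@Ufun_cont R d K Os w HC2 (PO w Pw)).
have [C [C0 HU]] := @U_dev R d (Ufun K) v eps Pv eps0 (@Ufun_cont R d K Os v HC2 (PO v Pv)) Ubd.
have [K1 HK1] := @cN_small R d%:R C eps (ler0n _ _) C0 eps0.
have key : exists N0, forall N, (N0 <= N)%N ->
    (((a N) - (F0 K + e))%:E <= ((N%:R)^-1 * rel_entropy (mu N) (@gibbs R d K N))%:E)%E.
  exists (maxn K1 1) => N hN.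
  have N0 : (0 < N)%N by apply: leq_trans hN; rewrite leq_maxr.
  have hc := HK1 N (leq_trans (leq_maxl _ _) hN).
  have hm := @main_N R d K N (mu N) v eps C N0 (Hmu N) Pv C0 HU.
  rewrite lee_fin; rewrite -/(a N) in hm.
  have : Ffun K v <= F0 K + eps by exact: ltW.
  move=> hF; have e3 : 3 * eps = e by rewrite /eps; field.
  lra.
have := @einf_le R _ _ key.
have -> : limn_einf (fun N => ((a N) - (F0 K + e))%:E) = (I - (F0 K + e)%:E)%E.
  apply: (cvg_limn_einf_sup _).1.
  have -> : (fun N => ((a N) - (F0 K + e))%:E) = (fun N => ((a N)%:E - (F0 K + e)%:E)%E).
    by apply/funext => N; rewrite EFinB.
  apply: cvgeB => //; last exact: cvg_cst.
  by rewrite fin_num_adde_defl.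
rewrite EFinD oppeD // addeA leeBlDr //.
Qed.
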